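(* Let $k \in \mathbb{N}$. For every $n \in \mathbb{N}$ and all integers $h, t$ with $0 \le h \le k-1$ and $1 \le t \le F_n$: (i) $a_{k(F_{n+1}-1)+hF_n+t+1} = kF_{n+2} - k + 1 + hF_{n+1} + \lfloor (F_{n+1}+1+t)\varphi \rfloor - \lfloor (F_{n+1}+1)\varphi \rfloor$; (ii) $b_{k(F_{n+1}-1)+hF_n+t+1} = kF_{n+3} + hF_{n+2} - k + t + 2 + \lfloor (F_{n+1}+1+t)\varphi \rfloor - \lfloor (F_{n+1}+1)\varphi \rfloor$, where $\varphi = \frac{1+\sqrt{5}}{2}$.
   Context: Fibonacci numbers: $F_1 = F_2 = 1$, $F_{i+2} = F_{i+1} + F_i$. Let $\sigma$ be the substitution on finite sequences over $\{1,2\}$ replacing each entry $1$ by $2$ and each entry $2$ by $2,1$. Let $C_{1,1} = (1)$, $C_{i+1,1} = \sigma(C_{i,1})$. For fixed $k \in \mathbb{N}$ and $i \in \mathbb{N}$, let $C_i^{(k)}$ be the concatenation of $k$ copies of $C_{i,1}$. Let $(c_n)_{n \in \mathbb{N}}$ be the infinite sequence obtained by concatenating $C_1^{(k)}, C_2^{(k)}, C_3^{(k)}, \dots$ in order, and let $d_n = c_n + 1$. Define $a_1 = k+1$, $a_n = k+1 + \sum_{i=1}^{n-1} c_i$, and $b_1 = 2k+2$, $b_n = 2k+2 + \sum_{i=1}^{n-1} d_i$ for $n \in \mathbb{N}$. *)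

(* Defs.v *)
From mathcomp Require Import all_boot all_order all_algebra.
From mathcomp Require Import reals.
Set Implicit Arguments. Unset Strict Implicit. Unset Printing Implicit Defensive.
Import Order.TTheory GRing.Theory Num.Theory.

(* Fibonacci: fib 1 = fib 2 = 1 (fib 0 = 0 is only an auxiliary value). *)
Fixpoint fib (n : nat) : nat :=
  match n with
  | 0 => 0
  | 1 => 1
  | (m.+1 as p).+1 => fib p + fib m
  end.

Definition sigma_sub (s : seq nat) : seq nat :=
  flatten [seq (if x == 1 then [:: 2] else [:: 2; 1]) | x <- s].

(* C_{i,1}, i >= 1: C_{1,1} = (1), C_{i+1,1} = sigma(C_{i,1}). *)
Definition C1 (i : nat) : seq nat := iter i.-1 sigma_sub [:: 1].

Definition Ck (k i : nat) : seq nat := flatten (nseq k (C1 i)).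

Definition cprefix (k m : nat) : seq nat := flatten [seq Ck k i | i <- iota 1 m].

(* c_n (1-indexed): entry n of the infinite concatenation. Since every
   block is nonempty (for k >= 1), the first n blocks have length >= n. *)
Definition cseq (k n : nat) : nat := nth 0 (cprefix k n) n.-1.

Definition dseq (k n : nat) : nat := (cseq k n).+1.

Definition a_seq (k n : nat) : nat := k.+1 + \sum_(1 <= i < n) cseq k i.
Definition b_seq (k n : nat) : nat := (2 * k + 2) + \sum_(1 <= i < n) dseq k i.

Local Open Scope ring_scope.
Definition phi (R : realType) : R := (1 + Num.sqrt 5) / 2.

(* Main.v *)
Require Import Defs.
From mathcomp Require Import all_boot all_order all_algebra.
From mathcomp Require Import reals.
From mathcomp Require Import ring lra zify.
Import Order.TTheory GRing.Theory Num.Theory.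

Lemma fibSS n : fib n.+2 = (fib n.+1 + fib n)%N. Proof. by []. Qed.

Lemma sigma_cat s1 s2 : sigma_sub (s1 ++ s2) = sigma_sub s1 ++ sigma_sub s2.
Proof. by rewrite /sigma_sub map_cat flatten_cat. Qed.

Lemma C1S i : C1 i.+2 = sigma_sub (C1 i.+1).
Proof. by []. Qed.

Lemma C1_rec i : C1 i.+3 = C1 i.+2 ++ C1 i.+1.
Proof.
elim: i => [|i IH]; first by [].
by rewrite {1}C1S {1}IH sigma_cat -!C1S.
Qed.

Lemma C1_size_sum i : size (C1 i.+1) = fib i.+1 /\ sumn (C1 i.+1) = fib i.+2.
Proof.
suff : (size (C1 i.+1) = fib i.+1 /\ sumn (C1 i.+1) = fib i.+2) /\
       (size (C1 i.+2) = fib i.+2 /\ sumn (C1 i.+2) = fib i.+3) by case.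
elim: i => [|i [[s1 u1] [s2 u2]]]; first by [].
split; first by split.
by rewrite C1_rec size_cat sumn_cat s1 s2 u1 u2.
Qed.

Lemma flat_nseq_size_sum (C : seq nat) h :
  size (flatten (nseq h C)) = h * size C /\ sumn (flatten (nseq h C)) = h * sumn C.
Proof.
elim: h => [|h [IH1 IH2]]; first by [].
by rewrite /= size_cat sumn_cat IH1 IH2 !mulSn.
Qed.

Lemma cprefixS k m : cprefix k m.+1 = cprefix k m ++ Ck k m.+1.
Proof.
by rewrite /cprefix -[X in iota _ X]addn1 iotaD map_cat flatten_cat /= cats0 add1n.
Qed.

Lemma cprefixD k a b : exists r, cprefix k (a + b) = cprefix k a ++ r.
Proof.
elim: b => [|b [r IH]]; first by exists [::]; rewrite addn0 cats0.
by exists (r ++ Ck k (a + b).+1); rewrite addnS cprefixS IH catA.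
Qed.

Lemma cprefix_size_sum k m :
  size (cprefix k m) + k = k * fib m.+2 /\ sumn (cprefix k m) + 2 * k = k * fib m.+3.
Proof.
elim: m => [|m [IH1 IH2]]; first by rewrite /cprefix /=; lia.
rewrite cprefixS size_cat sumn_cat /Ck.
have [s1 u1] := flat_nseq_size_sum (C1 m.+1) k.
have [s2 u2] := C1_size_sum m.
rewrite s1 u1 s2 u2.
have e1 : k * fib m.+3 = k * fib m.+2 + k * fib m.+1 by rewrite -mulnDr.
have e2 : k * fib m.+4 = k * fib m.+3 + k * fib m.+2 by rewrite -mulnDr.
lia.
Qed.

Lemma fib_pos n : (0 < fib n.+1)%N.
Proof. elim: n => [|[|n] IH] //; by rewrite fibSS addn_gt0 IH. Qed.

Lemma fib_ge i : i.+1 <= fib i.+2.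
Proof.
suff : i.+1 <= fib i.+2 /\ i.+2 <= fib i.+3 by case.
elim: i => [|i [IH1 IH2]]; first by [].
split=> //; have e : fib i.+4 = fib i.+3 + fib i.+2 by [].
lia.
Qed.

Lemma size_cprefix_ge k i : 0 < k -> i <= size (cprefix k i).
Proof.
move=> k0; have [s _] := cprefix_size_sum k i; have := fib_ge i; nia.
Qed.

Lemma cseq_eq k N i : 0 < k -> 0 < i -> i.-1 < size (cprefix k N) ->
  cseq k i = nth 0 (cprefix k N) i.-1.
Proof.
move=> k0 i0 iN; have si := @size_cprefix_ge k i k0.
rewrite /cseq; case: (leqP i N) => H.
- have [r E] := cprefixD k i (N - i); rewrite subnKC // in E.
  by rewrite E nth_cat ifT //; lia.
- have [r E] := cprefixD k N (i - N); rewrite subnKC // in E; last by lia.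
  by rewrite E nth_cat ifT.
Qed.

Lemma sum_take (s : seq nat) L : \sum_(1 <= i < L.+1) nth 0 s i.-1 = sumn (take L s).
Proof.
elim: L => [|L IH]; first by rewrite big_geq // take0.
rewrite big_nat_recr //= IH.
case: (ltnP L (size s)) => H.
- by rewrite (take_nth 0 H) sumn_rcons.
- rewrite nth_default // !take_oversize // ?addn0 //; lia.
Qed.

Lemma sum_cseq k N L : 0 < k -> L <= size (cprefix k N) ->
  \sum_(1 <= i < L.+1) cseq k i = sumn (take L (cprefix k N)).
Proof.
move=> k0 LN; rewrite -sum_take; apply: eq_big_nat => i /andP [i1 iL].
apply: cseq_eq => //; lia.
Qed.

Local Open Scope ring_scope.

Local Close Scope ring_scope.
Lemma no_sq5 (a b : nat) : (0 < b)%N -> a * a <> 5 * (b * b).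
Proof.
move=> b0 E.
have a0 : (0 < a)%N.
  case: a E => [|a] E //; nia.
have := congr1 (logn 5) E.
rewrite lognM // lognM ?muln_gt0 ?b0 // lognM // (logn_prime 5 (isT : prime 5)) eqxx.
lia.
Qed.

Local Open Scope ring_scope.
Lemma N_ne0 (p : int) (m : nat) : (0 < m)%N -> p ^+ 2 - p * m%:Z - (m%:Z) ^+ 2 != 0.
Proof.
move=> m0; apply/eqP => H.
have E : (2 * p - m%:Z) * (2 * p - m%:Z) = 5%:Z * (m%:Z * m%:Z).
  have -> : (2 * p - m%:Z) * (2 * p - m%:Z) = 4 * (p ^+ 2 - p * m%:Z - (m%:Z) ^+ 2) + 5%:Z * (m%:Z * m%:Z) by ring.
  by rewrite H mulr0 add0r.
have := congr1 absz E.
rewrite !abszM !absz_nat.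
exact: no_sq5.
Qed.

Definition Nf (a b : int) := a ^+ 2 - a * b - b ^+ 2.
Lemma cassini n : Nf (fib n.+1)%:Z (fib n)%:Z = (-1) ^+ n.
Proof.
elim: n => [|n IH]; first by rewrite /Nf /=.
have -> : (fib n.+2)%:Z = (fib n.+1)%:Z + (fib n)%:Z by rewrite fibSS PoszD.
rewrite exprS -IH /Nf; ring.
Qed.

Section Real.
Variable R : realType.
Local Notation ph := (phi R).

Lemma sqrt5_sq : Num.sqrt (5:R) ^+ 2 = 5.
Proof. by rewrite sqr_sqrtr // ler0n. Qed.

Lemma phi2 : ph ^+ 2 = ph + 1.
Proof.
rewrite /phi; have := sqrt5_sq; set s := Num.sqrt 5 => hs.
have -> : ((1 + s) / 2) ^+ 2 = (1 + 2 * s + s ^+ 2) / 4 by field.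
by rewrite hs; field.
Qed.

Lemma phi_bounds : 8/5 <= ph /\ ph < 33/20.
Proof.
rewrite /phi; have := sqrt5_sq; set s := Num.sqrt 5 => hs.
have s0 : 0 <= s by apply: sqrtr_ge0.
have h1 : 11/5 <= s by nra.
have h2 : s < 23/10 by nra.
split; lra.
Qed.

Definition f (m : nat) : int := Num.floor ((m%:R : R) * ph).

Lemma f_le m : (f m)%:~R <= (m%:R : R) * ph.
Proof. by rewrite -floor_ge_int. Qed.
Lemma f_lt m : (m%:R : R) * ph < (f m + 1)%:~R.
Proof. by rewrite -floor_lt_int ltzD1. Qed.

Lemma f_val m (q : int) : q%:~R <= (m%:R : R) * ph < q%:~R + 1 -> f m = q.
Proof. move=> H; apply: floor_def; by rewrite intrD. Qed.

Ltac fvt := let h1 := fresh in let h2 := fresh in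
  have [h1 h2] := phi_bounds; apply: f_val; apply/andP; split;
  rewrite ?mulrS ?mulr1n; lra.
Lemma f1 : f 1 = 1. Proof. fvt. Qed.
Lemma f2 : f 2 = 3. Proof. fvt. Qed.
Lemma f3 : f 3 = 4. Proof. fvt. Qed.
Lemma f4 : f 4 = 6. Proof. fvt. Qed.
Lemma f5 : f 5 = 8. Proof. fvt. Qed.
Lemma f6 : f 6 = 9. Proof. fvt. Qed.

Lemma core1 (e z x y : R) : e*z = 1 -> 0 < y -> y < z -> x*y <= -1 -> x + e <= 0.
Proof.
move=> ez y0 yz xy; rewrite leNgt; apply/negP => H.
have e0 : 0 < e by nra.
have h1 : 0 < (x + e) * y by apply: mulr_gt0.
have h2 : 0 < e * (z - y) by apply: mulr_gt0; lra.
nra.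
Qed.
Lemma core2 (e z x y : R) : e*z = -1 -> 0 < y -> y < z -> 1 <= x*y -> 0 < x + e.
Proof.
move=> ez y0 yz xy; rewrite ltNge; apply/negP => H.
have e0 : e < 0 by nra.
have h1 : 0 <= - (x + e) * y by apply: mulr_ge0; lra.
have h2 : 0 < - e * (z - y) by apply: mulr_gt0; lra.
nra.
Qed.
Lemma ylt (M F0 Fm G ph Q : R) : 8/5 <= ph -> ph < 33/20 -> 1 <= M -> M <= F0 + 1 ->
  F0 = Fm + G -> 0 <= G -> 2 <= Fm -> Q <= M * ph ->
  Q + M * (ph - 1) + 1 < F0 + (F0 + Fm) * ph.
Proof.
move=> *.
have h1 : 0 <= (2 - ph) * G by nra.
have h2 : 0 <= (F0 + 1 - M) * (2 * ph - 1) by nra.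
nra.
Qed.
Lemma ygt (M ph Q : R) : 8/5 <= ph -> 1 <= M -> M * ph < Q + 1 -> 0 < Q + M * (ph - 1).
Proof. move=> *. have : 0 <= (M - 1) * (2 * ph - 1) by nra. nra. Qed.



Lemma intr_nat (n : nat) : ((n%:Z)%:~R : R) = n%:R.
Proof. by []. Qed.

Lemma Nreal (p : int) (m : nat) :
  ((p%:~R : R) - m%:R * ph) * (p%:~R + m%:R * (ph - 1)) = (Nf p m%:Z)%:~R.
Proof.
rewrite /Nf !(rmorphB, rmorphM, rmorphXn) /= intr_nat.
have := phi2; set P := ph; move=> h2.
have -> : (p%:~R - m%:R * P) * (p%:~R + m%:R * (P - 1)) =
  p%:~R ^+ 2 - p%:~R * m%:R - m%:R ^+ 2 * (P ^+ 2 - P - 1) - (m%:R:R) ^+ 2 by ring.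
rewrite h2; ring.
Qed.

Lemma int_ne0 (z : int) : z != 0 -> ((z%:~R : R) <= -1) \/ (1 <= (z%:~R : R)).
Proof.
move=> nz.
have : (z <= -1) || (1 <= z) by lia.
case/orP => H; [left | right].
  by rewrite -(ler_int R) in H.
by rewrite -(ler_int R) in H.
Qed.

Lemma key n m : (2 <= n)%N -> (1 <= m)%N -> (m <= fib n + 1)%N ->
  f (fib n.+1 + m) = (fib n.+2)%:Z + f m.
Proof.
move=> n2 m1 mle.
have [n4|n4] := ltnP n 4.
  case: n n2 n4 mle => [|[|[|[|n]]]] // _ _ mle.
  - case: m m1 mle => [|[|[|m]]] // _ _.
    + by rewrite (_ : (fib 3 + 1 = 3)%N) // f3 f1.
    + by rewrite (_ : (fib 3 + 2 = 4)%N) // f4 f2.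
  - case: m m1 mle => [|[|[|[|m]]]] // _ _.
    + by rewrite (_ : (fib 4 + 1 = 4)%N) // f4 f1.
    + by rewrite (_ : (fib 4 + 2 = 5)%N) // f5 f2.
    + by rewrite (_ : (fib 4 + 3 = 6)%N) // f6 f3.
have hp := phi_bounds; case: hp => hp1 hp2.
have hq1 := f_le m; have hq2 := f_lt m.
rewrite intrD in hq2.
apply: f_val.
rewrite intrD intr_nat (natrD _ (fib n.+1) m).
have G0 : 0 <= ((fib n.-2)%:R : R) by [].
have Fm2 : 2 <= ((fib n.-1)%:R : R).
  rewrite ler_nat; case: n n4 {n2 mle G0} => [|[|[|[|j]]]] // _.
  rewrite (fibSS j.+1).
  by have := fib_pos j.+1; have := fib_pos j; lia.
have hF0 : ((fib n)%:R : R) = (fib n.-1)%:R + (fib n.-2)%:R.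
  rewrite -natrD; congr (_%:R); case: n n4 {n2 mle G0 Fm2} => [|[|n]] // _; exact: fibSS.
have hF1 : ((fib n.+1)%:R : R) = (fib n)%:R + (fib n.-1)%:R.
  rewrite -natrD; congr (_%:R); case: n n4 {n2 mle hF0 Fm2 G0} => [|n] // _; exact: fibSS.
have hF2 : ((fib n.+2)%:R : R) = (fib n.+1)%:R + (fib n)%:R by rewrite fibSS natrD.
have M1 : 1 <= (m%:R : R) by rewrite (_ : 1 = 1%:R) // ler_nat.
have M2 : (m%:R : R) <= (fib n)%:R + 1 by rewrite (_ : 1 = 1%:R) // -natrD ler_nat.
set Q := ((f m)%:~R : R) in hq1 hq2 *.
set M := (m%:R : R) in hq1 hq2 M1 M2 *.
set F0 := ((fib n)%:R : R) in hF0 hF1 hF2 M2 *.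
set F1 := ((fib n.+1)%:R : R) in hF1 hF2 *.
set F2 := ((fib n.+2)%:R : R) in hF2 *.
set Fm := ((fib n.-1)%:R : R) in hF0 hF1 Fm2 *.
set G := ((fib n.-2)%:R : R) in hF0 G0 *.
have ph2 := phi2.
have ez : (F2 - F1 * ph) * (F0 + F1 * ph) = 1 \/ (F2 - F1 * ph) * (F0 + F1 * ph) = -1.
  have C0 := cassini n.+1; rewrite -signr_odd in C0.
  have C : ((Nf (fib n.+2)%:Z (fib n.+1)%:Z)%:~R : R) = ((-1) ^+ odd n.+1 : int)%:~R by rewrite C0.
  rewrite /Nf !(rmorphB, rmorphM, rmorphXn) ?intr_nat -/F1 -/F2 in C.
  have -> : (F2 - F1 * ph) * (F0 + F1 * ph) = F2 ^+ 2 - F2 * F1 - F1 ^+ 2.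
    have -> : F0 = F2 - F1 by rewrite hF2; ring.
    have -> : (F2 - F1 * ph) * (F2 - F1 + F1 * ph) = F2 ^+ 2 - F2 * F1 - F1 ^+ 2
      - F1 ^+ 2 * (ph ^+ 2 - ph - 1) by ring.
    by rewrite ph2; ring.
  rewrite C; case: (odd _); [right | left]; by rewrite ?expr1 ?expr0.
have N1 := Nreal (f m) m.
have N2 := Nreal (f m + 1) m.
have nz1 : Nf (f m) m%:Z != 0 by apply: N_ne0.
have nz2 : Nf (f m + 1) m%:Z != 0 by apply: N_ne0.
rewrite -/Q in N1.
rewrite intrD -/Q in N2.
have one : (1%:~R : R) = 1 by [].
rewrite one -/M in N2. rewrite -/M in N1.
have hq2' : M * ph < Q + 1 by rewrite -one.
have y0 : 0 < Q + M * (ph - 1) by exact: (ygt _ _ _ hp1 M1 hq2').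
have yz : Q + M * (ph - 1) + 1 < F0 + F1 * ph.
  rewrite hF1; exact: (ylt _ _ _ _ _ _ hp1 hp2 M1 M2 hF0 G0 Fm2 hq1).
have xy1 : (Q - M * ph) * (Q + M * (ph - 1)) <= -1.
  case: (int_ne0 _ nz1); rewrite -N1 // => H.
  have : 0 <= (M * ph - Q) * (Q + M * (ph - 1)) by apply: mulr_ge0; lra.
  nra.
have xy2 : 1 <= (Q + 1 - M * ph) * (Q + 1 + M * (ph - 1)).
  case: (int_ne0 _ nz2); rewrite -N2 // => H.
  have : 0 < (Q + 1 - M * ph) * (Q + 1 + M * (ph - 1)) by apply: mulr_gt0; lra.
  lra.
have E : (F1 + M) * ph = F2 + Q - ((Q - M * ph) + (F2 - F1 * ph)) by ring.
have yz1 : Q + M * (ph - 1) < F0 + F1 * ph by lra.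
have yz2 : Q + 1 + M * (ph - 1) < F0 + F1 * ph by lra.
have y02 : 0 < Q + 1 + M * (ph - 1) by lra.
apply/andP; split.
- case: ez => ez.
  + have := core1 _ _ _ _ ez y0 yz1 xy1; lra.
  + have := core2 _ _ _ _ ez y02 yz2 xy2.
    have : Q - M * ph <= 0 by lra.
    have : 0 < F0 + F1 * ph by lra.
    move=> z0 x0 _.
    have : F2 - F1 * ph < 0 by nra.
    lra.
- case: ez => ez.
  + have := core1 _ _ _ _ ez y0 yz1 xy1.
    have : 0 < F2 - F1 * ph by nra.
    lra.
  + have := core2 _ _ _ _ ez y02 yz2 xy2; lra.
Qed.
End Real.

Local Close Scope ring_scope.
Lemma take_main k n h t : 0 < k -> h <= k - 1 -> t <= fib n.+1 ->
  take (size (cprefix k n) + (h * fib n.+1 + t)) (cprefix k n.+1) =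
  cprefix k n ++ (flatten (nseq h (C1 n.+1)) ++ take t (C1 n.+1)).
Proof.
move=> k0 hk tle.
have [sC _] := C1_size_sum n.
have [sF _] := flat_nseq_size_sum (C1 n.+1) h.
rewrite cprefixS take_cat ltnNge leq_addr /= addKn; congr (_ ++ _).
rewrite /Ck (_ : k = h + (k - h - 1).+1); last by lia.
rewrite nseqD flatten_cat take_cat sF sC ltnNge leq_addr /= addKn; congr (_ ++ _).
by rewrite /= takel_cat // sC.
Qed.

Section Word.
Variable R : realType.
Local Open Scope ring_scope.

Lemma word n t : (2 <= n)%N -> (t <= fib n)%N ->
  (sumn (take t (C1 n)))%:Z = f R t.+1 - 1.
Proof.
move=> n2; case: n n2 => [|[|n0]] // _; move: t.
suff H : forall n, (forall t, (t <= fib n.+2)%N -> (sumn (take t (C1 n.+2)))%:Z = f R t.+1 - 1) /\ (forall t, (t <= fib n.+3)%N -> (sumn (take t (C1 n.+3)))%:Z = f R t.+1 - 1).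
  by move=> t tle; case: (H n0) => A _; apply: A.
clear n0; elim=> [|n [IH1 IH2]].
  split.
  - by case=> [|[|t]] // _; rewrite ?f1 ?f2.
  - by case=> [|[|[|t]]] // _; rewrite ?f1 ?f2 ?f3.
split => // t tle.
have [sC uC] := C1_size_sum n.+2.
rewrite (C1_rec n.+1) take_cat sC.
case: ltnP => H.
  by apply: IH2; apply: ltnW.
rewrite sumn_cat uC PoszD.
have ule : (t - fib n.+3 <= fib n.+2)%N.
  by have e : fib n.+4 = (fib n.+3 + fib n.+2)%N by []; lia.
rewrite (IH1 _ ule).
have -> : t.+1 = (fib n.+3 + (t - fib n.+3).+1)%N by lia.
rewrite key //; last by lia.
lia.
Qed.
End Word.

Lemma fold_f (R : realType) (m : nat) : Num.floor ((m%:R : R) * phi R) = f R m.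
Proof. by []. Qed.

Local Open Scope ring_scope.
Theorem theorem5p1 (R : realType) (k : nat) (hk : (1 <= k)%N)
  (n : nat) (hn : (1 <= n)%N) (h t : nat)
  (hh : (h <= k - 1)%N) (ht1 : (1 <= t)%N) (ht2 : (t <= fib n)%N) :
  let idx := (k * (fib n.+1 - 1) + h * fib n + t + 1)%N in
  let fl := Num.floor (((fib n.+1 + 1 + t)%:R : R) * phi R)
          - Num.floor (((fib n.+1 + 1)%:R : R) * phi R) in
  ((a_seq k idx)%:Z = (k * fib n.+2)%:Z - k%:Z + 1 + (h * fib n.+1)%:Z + fl)
  /\
  ((b_seq k idx)%:Z = (k * fib n.+3)%:Z + (h * fib n.+2)%:Z - k%:Z + t%:Z + 2 + fl).
Proof.
case: n hn ht2 => [//|n] _ ht2.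
move=> idx fl.
have Sfl : (sumn (take t (C1 n.+1)))%:Z = fl.
  rewrite /fl !fold_f.
  case: n ht2 {idx fl} => [|n] ht2.
    have -> : t = 1%N by move: ht2 ht1 => /=; lia.
    by rewrite (_ : (fib 2 + 1 + 1 = 3)%N) // (_ : (fib 2 + 1 = 2)%N) // f3 f2.
  rewrite -addnA add1n (key R) // ?(key R _ 1%N) //; try by lia.
  rewrite (word R) // f1; lia.
have k0 : (0 < k)%N by [].
have [sp up] := cprefix_size_sum k n.
have [sC uC] := C1_size_sum n.
have [sF uF] := flat_nseq_size_sum (C1 n.+1) h.
have [sFk _] := flat_nseq_size_sum (C1 n.+1) k.
set p := cprefix k n in sp up.
move: Sfl; set S := sumn (take t (C1 n.+1)) => Sfl.
have Lsz : (k * (fib n.+2 - 1) = size p)%N by rewrite mulnBr muln1; lia.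
have idxE : idx = (size p + (h * fib n.+1 + t)).+1%N by rewrite /idx Lsz addn1 addnA.
have TM := take_main k n h t k0 hh ht2; rewrite -/p in TM.
have szN : (size p + (h * fib n.+1 + t) <= size (cprefix k n.+1))%N.
  rewrite cprefixS size_cat -/p /Ck sFk sC.
  have hk1 : (h.+1 <= k)%N by lia.
  have : (h * fib n.+1 + fib n.+1 <= k * fib n.+1)%N by have := leq_mul hk1 (leqnn (fib n.+1)); rewrite mulSn addnC.
  lia.
have sumE : (\sum_(1 <= i < idx) cseq k i = sumn p + h * fib n.+2 + S)%N.
  rewrite idxE (@sum_cseq k n.+1) // TM !sumn_cat uF uC; lia.
have e1 : (k * fib n.+4 = k * fib n.+3 + k * fib n.+2)%N by rewrite -mulnDr.
have e2 : (h * fib n.+3 = h * fib n.+2 + h * fib n.+1)%N by rewrite -mulnDr.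
split.
- rewrite /a_seq sumE -Sfl; lia.
- rewrite /b_seq /dseq.
  have -> : (\sum_(1 <= i < idx) (cseq k i).+1 = \sum_(1 <= i < idx) cseq k i + \sum_(1 <= i < idx) 1)%N.
    rewrite -big_split; apply: eq_bigr => i _ /=; lia.
  rewrite sumE sum_nat_const_nat idxE -Sfl; lia.
Qed.
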